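(* Let $n,s,t\in\mathbb{N}$ with $1\le s\le t\le n$, and assume $t\ge 2s$ and $s\ge n-t$. Then the number $\mathcal{M}(n,s,t)$ of monochromatic Schur triples on $\{1,\dots,n\}$ under the coloring $R^sB^{t-s}R^{n-t}$ is \[ \mathcal{M}(n,s,t)=\frac{s(s-1)}{2}+\frac{(t-2s)(t-2s-1)}{2}+(n-t)(n-t-1). \]
   Context: A Schur triple on $[n]=\{1,\dots,n\}$ is an ordered triple $(x,y,z)\in[n]^3$ with $z=x+y$ (so $(x,y,x+y)$ and $(y,x,x+y)$ are distinct if $x\ne y$); it is monochromatic under a coloring $\chi$ of $[n]$ if $\chi(x)=\chi(y)=\chi(z)$. The coloring $R^sB^{t-s}R^{n-t}$ colors $1,\dots,s$ red, $s+1,\dots,t$ blue, and $t+1,\dots,n$ red. *)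

(* Defs.v *)
From mathcomp Require Import all_boot.
Set Implicit Arguments. Unset Strict Implicit. Unset Printing Implicit Defensive.

(* A 2-colouring of the integers: true = red, false = blue. *)
Definition RBR_col (s t : nat) (x : nat) : bool := (x <= s) || (t < x).

Definition num_mono_schur (n : nat) (chi : nat -> bool) : nat :=
  #|[set p : 'I_n.+1 * 'I_n.+1 |
      [&& 1 <= p.1, 1 <= p.2, p.1 + p.2 <= n,
          chi p.1 == chi p.2 & chi p.2 == chi (p.1 + p.2)]]|.

Definition M_nst (n s t : nat) : nat := num_mono_schur n (RBR_col s t).

(* Main.v *)
Require Import Defs.
From mathcomp Require Import all_boot zify.
Lemma cnt_int (a c N : nat) :
  \sum_(0 <= y < N) ((a < y) && (y <= c)) = minn c N.-1 - a.
Proof.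
elim: N => [|N IH]; first by rewrite big_geq.
rewrite big_nat_recr //= IH.
case: N IH => [|N] IH /=.
  by case: (a < 0) => //=; rewrite andbF.
case: (ltnP a N.+1) => H1; case: (leqP N.+1 c) => H2 /=; lia.
Qed.

Lemma triG (a m N : nat) : a + m <= N ->
  \sum_(0 <= x < N) (a < x) * (a + m - x) = 'C(m, 2).
Proof.
elim: m => [|m IH] H.
  rewrite bin_small // big1_seq // => x _; case: (ltnP a x) => // ?; lia.
have E: forall x, (a < x) * (a + m.+1 - x) = (a < x) * (a + m - x) + ((a < x) && (x <= a + m)).
  move=> x; case: (ltnP a x) => /= ?; [case: (leqP x (a+m)) => ? /=|]; lia.
rewrite (eq_bigr _ (fun x _ => E x)) big_split /= IH; last lia.
rewrite cnt_int binS bin1; lia.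
Qed.

Lemma tri (a b c N : nat) : a + b <= c -> c - a <= N -> c - b <= N ->
  \sum_(0 <= x < N) \sum_(0 <= y < N) [&& a < x, b < y & x + y <= c] = 'C(c - a - b, 2).
Proof.
move=> H1 H2 H3.
have E: forall x, \sum_(0 <= y < N) [&& a < x, b < y & x + y <= c] = (a < x) * (a + (c - a - b) - x).
  move=> x; case: (ltnP a x) => Hx /=; last by rewrite big1 // => y _; rewrite mul0n.
  rewrite mul1n.
  rewrite (eq_bigr (fun y => nat_of_bool ((b < y) && (y <= c - x)))); last first.
    move=> y _; case: (ltnP b y) => //= ?; congr nat_of_bool; apply/idP/idP => ?; lia.
  rewrite cnt_int; lia.
rewrite (eq_bigr _ (fun x _ => E x)) triG //; lia.
Qed.
Lemma card_sum n (P : nat -> nat -> bool) :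
  #|[set p : 'I_n.+1 * 'I_n.+1 | P p.1 p.2]| =
  \sum_(0 <= x < n.+1) \sum_(0 <= y < n.+1) P x y.
Proof.
rewrite cardsE -sum1_card big_mkcond /=.
rewrite -(pair_big xpredT xpredT (fun i j : 'I_n.+1 => nat_of_bool (P i j))) /=.
rewrite big_mkord; apply: eq_bigr => i _; rewrite big_mkord; apply: eq_bigr => j _.
by [].
Qed.

Theorem lemma2p1 (n s t : nat) :
  1 <= s -> s <= t -> t <= n -> 2 * s <= t -> n - t <= s ->
  M_nst n s t =
    (s * (s - 1)) %/ 2 + ((t - 2 * s) * (t - 2 * s - 1)) %/ 2
    + (n - t) * (n - t - 1).
Proof.
move=> H1 H2 H3 H4 H5.
rewrite /M_nst /num_mono_schur.
rewrite (card_sum n (fun x y => [&& 1 <= x, 1 <= y, x + y <= n,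
          RBR_col s t x == RBR_col s t y & RBR_col s t y == RBR_col s t (x + y)])).
have E : forall x y, nat_of_bool [&& 1 <= x, 1 <= y, x + y <= n,
          RBR_col s t x == RBR_col s t y & RBR_col s t y == RBR_col s t (x + y)]
  = nat_of_bool [&& 0 < x, 0 < y & x + y <= s] + nat_of_bool [&& s < x, s < y & x + y <= t]
    + nat_of_bool [&& 0 < x, t < y & x + y <= n] + nat_of_bool [&& t < x, 0 < y & x + y <= n].
  move=> x y; rewrite /RBR_col.
  case: (leqP x s) => ?; case: (leqP y s) => ?; case: (leqP (x+y) s) => ?;
  case: (ltnP t x) => ?; case: (ltnP t y) => ?; case: (ltnP t (x+y)) => ?;
  case: (leqP (x+y) n) => ?; case: (leqP (x+y) t) => ?; case: (ltnP 0 x) => ?; case: (ltnP 0 y) => ? /=; lia.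
under eq_bigr => x _ do under eq_bigr => y _ do rewrite E.
rewrite (eq_bigr _ (fun x _ => big_split _ _ _ _ _)) big_split /=.
rewrite (eq_bigr _ (fun x _ => big_split _ _ _ _ _)) big_split /=.
rewrite (eq_bigr _ (fun x _ => big_split _ _ _ _ _)) big_split /=.
rewrite (tri 0 0 s); try lia.
rewrite (tri s s t); try lia.
rewrite (tri 0 t n); try lia.
rewrite (tri t 0 n); try lia.
have B : forall m, 'C(m,2) + 'C(m,2) = m * (m - 1).
  move=> m; rewrite addnn -mul2n bin2 -divn2 mulnC divnK; first by rewrite subn1.
  by rewrite dvdn2 oddM; case: m => //= m; case: (odd m).
have -> : s - 0 - 0 = s by lia.
have -> : t - s - s = t - 2 * s by lia.
have -> : n - 0 - t = n - t by lia.
rewrite subn0 -addnA B !bin2 -!divn2 !subn1 //.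
Qed.
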